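(* For every integer $k\ge 0$, $$\int_0^{\pi/2} x^2\csc(x)\sin(2kx)\,dx = 3\zeta(2)\sum_{n=1}^k\frac{(-1)^{n+1}}{2n-1}-4\sum_{n=1}^k\frac{(-1)^{n+1}}{(2n-1)^3}.$$
   Context: $\zeta$ denotes the Riemann zeta function (so $\zeta(2)=\pi^2/6$). Empty sums (for $k=0$) equal $0$. *)

(* Defs.v *)
From Stdlib Require Import Reals.
From Coquelicot Require Import Coquelicot.
Open Scope R_scope.

Definition zeta (s : nat) : R := Series (fun n : nat => / (INR (n + 1)) ^ s).

Definition csc (x : R) : R := / sin x.

(* Main.v *)
Require Import Defs.
From Stdlib Require Import Reals Lra Lia.
From Coquelicot Require Import Coquelicot.
Open Scope R_scope.

Ltac req := lazymatch goal with |- ?a = ?b => change (@eq R a b) end.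
Ltac cont := apply (ex_derive_continuous (K:=R_AbsRing) (V:=R_NormedModule)); auto_derive; auto.
Lemma INRS_match m : (match m with 0%nat => 1 | S _ => INR m + 1 end) = INR m + 1.
Proof. destruct m; simpl; ring. Qed.

Lemma wd m x : is_derive (fun x => cos x ^ S m * sin x) x
  ((INR m + 2) * cos x ^ S (S m) - (INR m + 1) * cos x ^ m).
Proof.
  auto_derive; auto. rewrite ?INRS_match. simpl pred.
  assert (H := sin2_cos2 x). unfold Rsqr in H.
  apply Rminus_diag_uniq.
  match goal with |- ?L - ?R = 0 =>
    replace (L - R) with (- (INR m + 1) * cos x ^ m * (sin x * sin x + cos x * cos x - 1)) by (simpl; ring) end.
  rewrite H; ring.
Qed.

Lemma bd m x : is_derive (fun x => 2 * (x * cos x ^ S (S m)) + (INR m + 2) * (x ^ 2 * sin x * cos x ^ S m)) x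
  (2 * cos x ^ S (S m) + (INR m + 2) ^ 2 * (x ^ 2 * cos x ^ S (S m))
     - (INR m + 2) * (INR m + 1) * (x ^ 2 * cos x ^ m)).
Proof.
  auto_derive; auto. rewrite ?INRS_match. simpl pred.
  assert (H := sin2_cos2 x). unfold Rsqr in H.
  apply Rminus_diag_uniq.
  match goal with |- ?L - ?R = 0 =>
    replace (L - R) with (- (INR m + 2) * (INR m + 1) * x * x * cos x ^ m * (sin x * sin x + cos x * cos x - 1)) by (simpl; ring) end.
  rewrite H; ring.
Qed.

Definition A n := RInt (fun x => cos x ^ (2*n)) 0 (PI/2).
Definition B n := RInt (fun x => x ^ 2 * cos x ^ (2*n)) 0 (PI/2).

Lemma exA n : ex_RInt (fun x => cos x ^ (2*n)) 0 (PI/2).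
Proof. apply (ex_RInt_continuous (V:=R_CompleteNormedModule)); intros; cont. Qed.
Lemma exB n : ex_RInt (fun x => x ^ 2 * cos x ^ (2*n)) 0 (PI/2).
Proof. apply (ex_RInt_continuous (V:=R_CompleteNormedModule)); intros; cont. Qed.

Lemma RInt_lin2 f g a b c d : ex_RInt f a b -> ex_RInt g a b ->
  RInt (fun x => c * f x + d * g x) a b = c * RInt f a b + d * RInt g a b.
Proof.
  intros [If Hf] [Ig Hg]. rewrite (is_RInt_unique _ _ _ _ Hf), (is_RInt_unique _ _ _ _ Hg).
  apply is_RInt_unique.
  exact (is_RInt_plus _ _ _ _ _ _ (is_RInt_scal _ _ _ c _ Hf) (is_RInt_scal _ _ _ d _ Hg)).
Qed.

Lemma RInt_lin3 f g h a b c d e : ex_RInt f a b -> ex_RInt g a b -> ex_RInt h a b ->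
  RInt (fun x => c * f x + d * g x + e * h x) a b = c * RInt f a b + d * RInt g a b + e * RInt h a b.
Proof.
  intros [If Hf] [Ig Hg] [Ih Hh].
  rewrite (is_RInt_unique _ _ _ _ Hf), (is_RInt_unique _ _ _ _ Hg), (is_RInt_unique _ _ _ _ Hh).
  apply is_RInt_unique.
  exact (is_RInt_plus _ _ _ _ _ _ (is_RInt_plus _ _ _ _ _ _ (is_RInt_scal _ _ _ c _ Hf) (is_RInt_scal _ _ _ d _ Hg)) (is_RInt_scal _ _ _ e _ Hh)).
Qed.

Lemma wallis n : (2 * INR n + 2) * A (S n) = (2 * INR n + 1) * A n.
Proof.
  assert (H0 : RInt (fun x => (INR (2*n) + 2) * cos x ^ S (S (2*n)) - (INR (2*n) + 1) * cos x ^ (2*n)) 0 (PI/2) = 0).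
  { rewrite (is_RInt_unique _ _ _ _ (is_RInt_derive (fun x => cos x ^ S (2*n) * sin x) _ 0 (PI/2)
    (fun x _ => wd (2*n) x) ltac:(intros; cont))).
    rewrite cos_PI2, sin_0. change (@eq R (minus (0 ^ S (2 * n) * sin (PI / 2)) (cos 0 ^ S (2 * n) * 0)) 0). unfold minus, plus, opp; simpl. rewrite !Rmult_0_r, !Rmult_0_l, Ropp_0, Rplus_0_l. reflexivity. }
  rewrite (RInt_ext _ (fun x => (INR (2*n) + 2) * cos x ^ S (S (2*n)) + (- (INR (2*n) + 1)) * cos x ^ (2*n))) in H0
    by (intros; req; ring).
  rewrite RInt_lin2 in H0.
  - unfold A. replace (2 * S n)%nat with (S (S (2*n))) by lia.
    rewrite mult_INR in H0. simpl (INR 2) in H0. lra.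
  - replace (S (S (2*n))) with (2 * S n)%nat by lia. apply exA.
  - apply exA.
Qed.

Lemma brec n : 2 * A (S n) + (2 * INR n + 2) ^ 2 * B (S n) - (2 * INR n + 2) * (2 * INR n + 1) * B n = 0.
Proof.
  assert (H0 : RInt (fun x => 2 * cos x ^ S (S (2*n)) + (INR (2*n) + 2) ^ 2 * (x ^ 2 * cos x ^ S (S (2*n)))
     - (INR (2*n) + 2) * (INR (2*n) + 1) * (x ^ 2 * cos x ^ (2*n))) 0 (PI/2) = 0).
  { rewrite (is_RInt_unique _ _ _ _ (is_RInt_derive _ _ 0 (PI/2)
    (fun x _ => bd (2*n) x) ltac:(intros; cont))).
    rewrite cos_PI2, sin_0. unfold minus, plus, opp; simpl. req. ring. }
  rewrite (RInt_ext _ (fun x => 2 * cos x ^ S (S (2*n)) + (INR (2*n) + 2) ^ 2 * (x ^ 2 * cos x ^ S (S (2*n)))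
     + (- ((INR (2*n) + 2) * (INR (2*n) + 1))) * (x ^ 2 * cos x ^ (2*n)))) in H0
    by (intros; req; ring).
  rewrite RInt_lin3 in H0.
  - unfold A, B. replace (2 * S n)%nat with (S (S (2*n))) by lia.
    rewrite mult_INR in H0. simpl (INR 2) in H0. lra.
  - replace (S (S (2*n))) with (2 * S n)%nat by lia. apply exA.
  - replace (S (S (2*n))) with (2 * S n)%nat by lia. apply exB.
  - apply exB.
Qed.

Lemma A0 : A 0 = PI / 2.
Proof.
  unfold A. simpl. rewrite RInt_const. unfold scal; simpl. unfold mult; simpl. ring.
Qed.

Lemma B0d x : is_derive (fun x => x^3/3) x (x ^ 2 * cos x ^ (2*0)).
Proof. auto_derive; auto. simpl. field. Qed.

Lemma B0 : B 0 = (PI/2)^3/3.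
Proof.
  unfold B. rewrite (is_RInt_unique _ _ _ _ (is_RInt_derive (fun x => x^3/3) _ 0 (PI/2)
    (fun x _ => B0d x) ltac:(intros; cont))).
  unfold minus, plus, opp; simpl. req. field.
Qed.

Lemma A_pos n : 0 < A n.
Proof.
  induction n.
  - rewrite A0. assert (H:=PI_RGT_0). lra.
  - assert (H := wallis n). assert (0 <= INR n) by apply pos_INR.
    assert (A (S n) = (2 * INR n + 1) / (2 * INR n + 2) * A n) by (apply (Rmult_eq_reg_l (2*INR n+2)); [rewrite H; field; lra | lra]).
    rewrite H1. apply Rmult_lt_0_compat; auto. apply Rdiv_lt_0_compat; lra.
Qed.

Lemma x_le_3sin x : 0 <= x <= PI/2 -> x <= 3 * sin x.
Proof.
  intros Hx. assert (H4 := PI_4). assert (H := sin_bound x 0 ltac:(lra) ltac:(lra)).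
  destruct H as [H _]. unfold sin_approx, sin_term in H. simpl in H.
  nra.
Qed.

Lemma pow_even_ge0 c n : 0 <= c ^ (2*n).
Proof. rewrite pow_mult. apply pow_le. nra. Qed.

Lemma B_ge0 n : 0 <= B n.
Proof.
  unfold B.
  assert (E : RInt (fun _ => 0) 0 (PI/2) = (PI/2 - 0) * 0) by (rewrite RInt_const; reflexivity).
  apply Rle_trans with (RInt (fun _ => 0) 0 (PI/2)); [rewrite E; lra|]. apply RInt_le.
  - assert (H:=PI_RGT_0). lra.
  - apply (ex_RInt_continuous (V:=R_CompleteNormedModule)); intros; cont.
  - apply exB.
  - intros x Hx. assert (H := pow_even_ge0 (cos x) n). nra.
Qed.

Lemma B_le n : B n <= 9 * (A n - A (S n)).
Proof.
  replace (9 * (A n - A (S n))) with (9 * A n + (-9) * A (S n)) by ring.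
  unfold A, B. rewrite <- RInt_lin2; try apply exA.
  apply RInt_le.
  - assert (H:=PI_RGT_0). lra.
  - apply exB.
  - apply (ex_RInt_continuous (V:=R_CompleteNormedModule)); intros; cont.
  - intros x Hx. replace (2 * S n)%nat with (S (S (2*n))) by lia. change (cos x ^ S (S (2*n))) with (cos x * (cos x * cos x ^ (2*n))).
    assert (H := pow_even_ge0 (cos x) n). assert (H1 := x_le_3sin x ltac:(lra)).
    assert (H2 := sin2_cos2 x). unfold Rsqr in H2.
    assert (0 <= x) by lra.
    assert (x * x <= 9 * (sin x * sin x)) by nra.
    replace (9 * cos x ^ (2 * n) + -9 * (cos x * (cos x * cos x ^ (2 * n)))) with
      (9 * (sin x * sin x) * cos x ^ (2*n)) by (replace (sin x * sin x) with (1 - cos x * cos x) by lra; ring).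
    replace (x^2) with (x*x) by ring. apply Rmult_le_compat_r; auto.
Qed.

Definition r n := B n / A n.

Lemma r_step n : / INR (n + 1) ^ 2 = 2 * (r n - r (S n)).
Proof.
  assert (HW := wallis n). assert (HB := brec n). assert (HA := A_pos n).
  assert (0 <= INR n) by apply pos_INR.
  assert (HA' : A (S n) = (2 * INR n + 1) / (2 * INR n + 2) * A n)
    by (apply (Rmult_eq_reg_l (2*INR n+2)); [rewrite HW; field; lra | lra]).
  assert (HB' : B (S n) = ((2 * INR n + 2) * (2 * INR n + 1) * B n - 2 * A (S n)) / (2 * INR n + 2) ^ 2)
    by (apply (Rmult_eq_reg_l ((2*INR n+2)^2)); [field_simplify; lra | nra]).
  unfold r. rewrite HB'. rewrite HA'. rewrite plus_INR. simpl (INR 1).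
  field. lra.
Qed.

Lemma psum N : sum_n (fun k => / INR (k + 1) ^ 2) N = PI ^ 2 / 6 - 2 * r (S N).
Proof.
  induction N.
  - rewrite sum_O. rewrite r_step. unfold r at 1. rewrite A0, B0.
    req. field. assert (H:=PI_RGT_0). lra.
  - rewrite sum_Sn, IHN. change plus with Rplus. rewrite (r_step (S N)). req. ring.
Qed.

Lemma r_bound N : 0 <= r (S N) <= 9 * / INR (S N).
Proof.
  assert (HW := wallis (S N)). assert (HA := A_pos (S N)). assert (HA2 := A_pos (S (S N))).
  assert (Hb := B_le (S N)). assert (Hb0 := B_ge0 (S N)).
  assert (0 <= INR N) by apply pos_INR. rewrite S_INR in *.
  unfold r. split.
  - apply Rdiv_le_0_compat; lra.
  - apply Rmult_le_reg_r with (A (S N)); auto.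
    unfold Rdiv. rewrite Rmult_assoc, Rinv_l by lra. rewrite Rmult_1_r.
    apply Rle_trans with (1 := Hb).
    assert (A (S (S N)) = (2 * (INR N + 1) + 1) / (2 * (INR N + 1) + 2) * A (S N))
      by (apply (Rmult_eq_reg_l (2*(INR N + 1)+2)); [rewrite HW; field; lra | lra]).
    rewrite H0.
    replace (9 * (A (S N) - (2 * (INR N + 1) + 1) / (2 * (INR N + 1) + 2) * A (S N)))
      with (9 * / (2 * (INR N + 1) + 2) * A (S N)) by (field; lra).
    apply Rmult_le_compat_r; [lra|].
    apply Rmult_le_compat_l; [lra|]. apply Rinv_le_contravar; lra.
Qed.

Lemma basel : is_series (fun n => / INR (n + 1) ^ 2) (PI ^ 2 / 6).
Proof.
  assert (L0 : is_lim_seq (fun N => 2 * r (S N)) 0).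
  { replace (Finite 0) with (Rbar_mult 2 0) by (simpl; f_equal; ring).
    apply is_lim_seq_scal_l.
    apply is_lim_seq_le_le with (u := fun _ => 0) (w := fun N => 9 * / INR (S N)).
    - apply r_bound.
    - apply is_lim_seq_const.
    - replace (Finite 0) with (Rbar_mult 9 0) by (simpl; f_equal; ring).
      apply is_lim_seq_scal_l.
      apply (is_lim_seq_incr_1 (fun n => / INR n)).
      replace (Finite 0) with (Rbar_inv p_infty) by reflexivity.
      apply is_lim_seq_inv. apply is_lim_seq_INR. discriminate. }
  assert (L := is_lim_seq_minus' _ _ _ _ (is_lim_seq_const (PI^2/6)) L0).
  rewrite Rminus_0_r in L.
  eapply is_lim_seq_ext in L. 2: { intros N. symmetry. apply psum. }
  exact L.
Qed.

Lemma zeta2_val : Series (fun n => / INR (n + 1) ^ 2) = PI ^ 2 / 6.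
Proof. apply is_series_unique, basel. Qed.

Lemma sc_PI2 k : sin ((2*INR k + 1) * (PI/2)) = (-1)^k /\ cos ((2*INR k + 1) * (PI/2)) = 0.
Proof.
  induction k.
  - simpl. rewrite Rmult_0_r, Rplus_0_l, Rmult_1_l, sin_PI2, cos_PI2. split; ring.
  - rewrite S_INR. replace ((2 * (INR k + 1) + 1) * (PI / 2)) with ((2*INR k + 1) * (PI/2) + PI) by field.
    rewrite neg_sin, neg_cos. destruct IHk as [H1 H2]. rewrite H1, H2. simpl. split; ring.
Qed.

Lemma sumcos k x : sin (2 * INR k * x) = 2 * sin x * sum_n_m (fun n => cos ((2*INR n - 1)*x)) 1 k.
Proof.
  induction k.
  - rewrite sum_n_m_zero by lia. simpl. rewrite Rmult_0_r, Rmult_0_l, sin_0. unfold zero; simpl. ring.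
  - rewrite sum_n_Sm by lia. change plus with Rplus. rewrite Rmult_plus_distr_l, <- IHk.
    rewrite S_INR.
    replace (2 * (INR k + 1) * x) with ((2*INR k + 1) * x + x) by ring.
    replace (2 * INR k * x) with ((2*INR k + 1) * x - x) by ring.
    replace ((2 * (INR k + 1) - 1) * x) with ((2*INR k + 1) * x) by ring.
    rewrite sin_plus, sin_minus. ring.
Qed.

Lemma term k : is_RInt (fun x => 2 * x^2 * cos ((2*INR k + 1) * x)) 0 (PI/2)
  (PI^2/2 * (-1)^k / (2*INR k + 1) - 4 * (-1)^k / (2*INR k + 1)^3).
Proof.
  assert (0 <= INR k) by apply pos_INR.
  set (m := 2 * INR k + 1).
  assert (Hm : 0 < m) by (unfold m; lra).
  assert (D : forall x, is_derive (fun x => 2 * (x^2 * sin (m*x) / m + 2 * x * cos (m*x) / m^2 - 2 * sin (m*x) / m^3)) x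
     (2 * x^2 * cos (m * x))).
  { intros x. auto_derive; auto. req. field. lra. }
  assert (HI := is_RInt_derive _ _ 0 (PI/2) (fun x _ => D x) ltac:(intros; cont)).
  destruct (sc_PI2 k) as [S C]. fold m in S, C.
  match type of HI with is_RInt _ _ _ ?l => replace (PI^2/2 * (-1)^k / m - 4 * (-1)^k / m^3) with l end.
  - exact HI.
  - cbv beta. rewrite S, C. unfold minus, plus, opp; simpl. req. rewrite !Rmult_0_r, sin_0, cos_0. field. lra.
Qed.

Lemma main_sum k : is_RInt (fun x => 2 * x^2 * sum_n_m (fun n => cos ((2*INR n - 1)*x)) 1 k) 0 (PI/2)
  (PI^2/2 * sum_n_m (fun n => (-1)^(n+1)/(2*INR n - 1)) 1 k - 4 * sum_n_m (fun n => (-1)^(n+1)/(2*INR n - 1)^3) 1 k).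
Proof.
  induction k.
  - rewrite !sum_n_m_zero by lia. unfold zero; simpl.
    eapply is_RInt_ext with (f := fun _ => 0).
    + intros. rewrite sum_n_m_zero by lia. unfold zero; simpl. req. ring.
    + match goal with |- is_RInt _ _ _ ?v => replace v with (scal (PI/2 - 0) (0:R)) end.
      * apply (is_RInt_const (V:=R_NormedModule)).
      * unfold scal; simpl; unfold mult; simpl. req. ring.
  - apply is_RInt_ext with (f := fun x => plus (2 * x^2 * sum_n_m (fun n => cos ((2*INR n - 1)*x)) 1 k)
        (2 * x^2 * cos ((2*INR k + 1) * x))).
    + intros x _. rewrite sum_n_Sm by lia. change plus with Rplus. rewrite S_INR.
      replace ((2*(INR k+1)-1)*x) with ((2*INR k+1)*x) by ring. req. ring.
    + match goal with |- is_RInt _ _ _ ?v =>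
        replace v with (plus (PI^2/2 * sum_n_m (fun n => (-1)^(n+1)/(2*INR n - 1)) 1 k - 4 * sum_n_m (fun n => (-1)^(n+1)/(2*INR n - 1)^3) 1 k)
          (PI^2/2 * (-1)^k / (2*INR k + 1) - 4 * (-1)^k / (2*INR k + 1)^3)) end.
      * apply (is_RInt_plus (V:=R_NormedModule)); [exact IHk | apply term].
      * rewrite !sum_n_Sm by lia. change plus with Rplus. rewrite S_INR.
        assert (0 <= INR k) by apply pos_INR.
        replace (S k + 1)%nat with (k + 2)%nat by lia. rewrite pow_add. simpl (INR 2).
        req. field. lra.
Qed.

(* sum_n_m f 1 k = f 1 + ... + f k, and equals 0 (empty sum) when k = 0. *)
Theorem lemma2 (k : nat) :
  is_RInt (fun x : R => x ^ 2 * csc x * sin (2 * INR k * x)) 0 (PI / 2)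
    (3 * zeta 2 * sum_n_m (fun n : nat => (-1) ^ (n + 1) / (2 * INR n - 1)) 1 k
     - 4 * sum_n_m (fun n : nat => (-1) ^ (n + 1) / (2 * INR n - 1) ^ 3) 1 k).
Proof.
  unfold zeta. rewrite zeta2_val.
  replace (3 * (PI ^ 2 / 6)) with (PI ^ 2 / 2) by field.
  apply is_RInt_ext with (f := fun x => 2 * x^2 * sum_n_m (fun n => cos ((2*INR n - 1)*x)) 1 k).
  - intros x Hx. assert (HP := PI_RGT_0).
    rewrite Rmin_left in Hx by lra. rewrite Rmax_right in Hx by lra.
    assert (Hs : 0 < sin x) by (apply sin_gt_0; lra).
    rewrite sumcos. unfold csc. req. field. lra.
  - apply main_sum.
Qed.
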